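(* Let $\mathbb{F}_q$ be any finite field. Every element of $\operatorname{Mat}_2(\mathbb{F}_q)$ can be written as a sum of two matrices in $\operatorname{SL}_2(\mathbb{F}_q)$.
   Context: $\operatorname{SL}_2(\mathbb{F}_q)$ is the set of $2\times 2$ matrices over $\mathbb{F}_q$ of determinant $1$. *)

(* Defs.v *)
From mathcomp Require Import all_boot all_algebra.
Set Implicit Arguments. Unset Strict Implicit. Unset Printing Implicit Defensive.
Import GRing.Theory.
Local Open Scope ring_scope.

Definition SL2 {F : finFieldType} (M : 'M[F]_2) : bool := \det M == 1.

(* Main.v *)
Require Import Defs.
From mathcomp Require Import all_boot all_algebra.
From mathcomp Require Import ring.
Local Open Scope ring_scope.
Import GRing.Theory.

Lemma det2_aux (R : comNzRingType) (M : 'M[R]_2) : \det M = M 0 0 * M 1 1 - M 0 1 * M 1 0.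
Proof.
rewrite (expand_det_row _ 0) big_ord_recl big_ord1 /cofactor !det_mx11 /=.
rewrite !mxE /=.
have E1 : lift (0 : 'I_2) (0 : 'I_1) = 1 by apply: val_inj.
have E2 : lift (lift (0 : 'I_2) (0 : 'I_1)) (0 : 'I_1) = 0 by apply: val_inj.
rewrite E1 /= in E2 *. rewrite E2.
by rewrite /bump /= expr0 expr1 !mul1r mulN1r mulrN.
Qed.


Definition mx2 {F : fieldType} (a b c d : F) : 'M[F]_2 :=
  \matrix_(i < 2, j < 2) if i == 0 then (if j == 0 then a else b) else (if j == 0 then c else d).

Lemma det_mx2 {F : fieldType} (a b c d : F) : \det (mx2 a b c d) = a * d - b * c.
Proof. by rewrite det2_aux !mxE. Qed.

Lemma mx2E {F : fieldType} (A : 'M[F]_2) : A = mx2 (A 0 0) (A 0 1) (A 1 0) (A 1 1).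
Proof.
apply/matrixP => i j; rewrite !mxE.
case: i => [[|[|i]] Hi] //; case: j => [[|[|j]] Hj] //=;
  by congr (A _ _); apply: val_inj.
Qed.

Lemma add_mx2 {F : fieldType} (a b c d a' b' c' d' : F) :
  mx2 a b c d + mx2 a' b' c' d' = mx2 (a + a') (b + b') (c + c') (d + d').
Proof.
apply/matrixP => i j; rewrite !mxE.
by case: (i == 0); case: (j == 0).
Qed.

Theorem proposition3p9 (F : finFieldType) (A : 'M[F]_2) :
  exists B C : 'M[F]_2, SL2 B /\ SL2 C /\ A = B + C.
Proof.
rewrite (mx2E A).
set a := A 0 0; set b := A 0 1; set c := A 1 0; set d := A 1 1.
rewrite /SL2.
have [a0|an0] := eqVneq a 0.
  have [d0|dn0] := eqVneq d 0.
    exists (mx2 1 b 0 1), (mx2 (-1) 0 c (-1)).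
    rewrite !det_mx2 add_mx2 a0 d0 !mulr0 !mul0r !subr0 mulr1 mulrNN mulr1.
    by rewrite !addrN addr0 add0r.
  set t := a - (1 + (b + 1) * (c - 1)) / d.
  exists (mx2 t (-1) 1 0), (mx2 (a - t) (b + 1) (c - 1) d).
  rewrite !det_mx2 add_mx2; split; [|split].
  - by apply/eqP; ring.
  - by apply/eqP; rewrite /t; field.
  - by congr mx2; ring.
set t := d - (1 + (b + 1) * (c - 1)) / a.
exists (mx2 0 (-1) 1 t), (mx2 a (b + 1) (c - 1) (d - t)).
rewrite !det_mx2 add_mx2; split; [|split].
- by apply/eqP; ring.
- by apply/eqP; rewrite /t; field.
- by congr mx2; ring.
Qed.
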